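(* For every $n$ there exist two sets $A$ and $B$, each consisting of $n$ pairwise disjoint axis-aligned rectangles in the plane, such that every sequence of sets $A=X_0,X_1,\dots,X_m=B$ in which each $X_j$ is an independent set of $A\cup B$ and consecutive sets differ by exactly one rectangle contains an empty set $X_j=\emptyset$; in particular no MIX function for rectangles has $\Gamma(n)<n$. Consequently, for any $\beta>0$, there is no fully dynamic data structure maintaining a $\beta$-approximate maximum independent set of axis-aligned rectangles that reports at most $o(n)$ changes in the independent set per update.
   Context: An independent set of a set of rectangles is a subset of pairwise disjoint rectangles; $\mathrm{OPT}(S)$ is the maximum size of an independent set of $S$. A MIX function assigns to independent sets $A,B$ a sequence $\mathrm{MIX}(A,B,i)$, $i\in[0,|A|+|B|]$, of independent sets with $\mathrm{MIX}(A,B,0)=A$, $\mathrm{MIX}(A,B,|A|+|B|)=B$, consecutive sets differing by one item, and $|\mathrm{MIX}(A,B,i)|\ge\min(|A|,|B|)-\Gamma(|A|+|B|)$. A fully dynamic data structure maintains a set $S$ of rectangles, initially empty, under updates $u$ replacing $S$ by $S\oplus\{u\}$ (insert if absent, delete if present), and after each update reports the symmetric difference between the previous and new maintained set $I\subseteq S$; it is $\beta$-approximate if $I$ is always an independent set with $|I|\ge\beta\,\mathrm{OPT}(S)$. Here $n$ is the number of stored rectangles. *)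

(* Defs.v *)
From HB Require Import structures.
From mathcomp Require Import all_boot all_order all_algebra.
From mathcomp Require Import finmap.
From mathcomp Require Import boolp.
Set Implicit Arguments. Unset Strict Implicit. Unset Printing Implicit Defensive.
Import Order.TTheory GRing.Theory Num.Theory.
Local Open Scope ring_scope.
Local Open Scope fset_scope.

Section Rects.
Variable R : realFieldType.

(* An axis-aligned rectangle ((x1, x2), (y1, y2)) denotes the closed box
   [x1,x2] x [y1,y2]; it is a genuine rectangle when x1 < x2 and y1 < y2. *)
Definition rect := ((R * R) * (R * R))%type.

Definition valid_rect (r : rect) : bool :=
  (r.1.1 < r.1.2) && (r.2.1 < r.2.2).

Definition in_rect (p : R * R) (r : rect) : bool :=
  (r.1.1 <= p.1 <= r.1.2) && (r.2.1 <= p.2 <= r.2.2).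

Definition rect_disjoint (r s : rect) : Prop :=
  forall p : R * R, ~ (in_rect p r /\ in_rect p s).

Definition independent (X : {fset rect}) : Prop :=
  forall r s, r \in X -> s \in X -> r <> s -> rect_disjoint r s.

Definition OPT (S : {fset rect}) : nat :=
  \max_(X <- fpowerset S | `[< independent X >]) #|` X|.

Definition fsymdiff (X Y : {fset rect}) : {fset rect} := (X `\` Y) `|` (Y `\` X).

Definition is_MIX (MIX : {fset rect} -> {fset rect} -> nat -> {fset rect})
    (Gamma : nat -> R) : Prop :=
  forall A B : {fset rect}, independent A -> independent B ->
    let N := (#|` A| + #|` B|)%N in
    [/\ MIX A B 0 = A, MIX A B N = B,
        (forall i, (i <= N)%N -> independent (MIX A B i) /\ MIX A B i `<=` A `|` B),
        (forall i, (i < N)%N -> #|` fsymdiff (MIX A B i) (MIX A B i.+1)| = 1%N) &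
        (forall i, (i <= N)%N ->
           (minn #|` A| #|` B|)%:R - Gamma N <= (#|` MIX A B i|)%:R)].

(* Fully dynamic setting.  An update history is a sequence of rectangles; each
   update u replaces S by S (+) {u}.  The stored set after history h: *)
Definition stored (h : seq rect) : {fset rect} :=
  foldl (fun S u => fsymdiff S [fset u]) fset0 h.

(* A (deterministic) fully dynamic data structure is described by the set
   D h it maintains after the update history h. *)
Definition dyn_beta_approx (beta : R) (D : seq rect -> {fset rect}) : Prop :=
  forall h : seq rect, all valid_rect h ->
    [/\ D h `<=` stored h, independent (D h) &
        beta * (OPT (stored h))%:R <= (#|` D h|)%:R].

Definition dyn_recourse_bound (D : seq rect -> {fset rect}) (f : nat -> R) : Prop :=
  forall (h : seq rect) (u : rect), all valid_rect (rcons h u) ->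
    (#|` fsymdiff (D h) (D (rcons h u))|)%:R <= f #|` stored (rcons h u)|.

Definition little_o_n (f : nat -> R) : Prop :=
  forall eps : R, 0 < eps -> exists N : nat, forall n : nat, (N <= n)%N ->
    `|f n| <= eps * n%:R.

End Rects.

(* Main.v *)
Require Import Defs.
From HB Require Import structures.
From mathcomp Require Import all_boot all_order all_algebra.
From mathcomp Require Import finmap.
From mathcomp Require Import boolp reals.
From mathcomp Require Import zify ring lra.
Import Order.TTheory GRing.Theory Num.Theory.
Local Open Scope ring_scope.
Local Open Scope fset_scope.
Set Implicit Arguments. Unset Strict Implicit.

Section Main.
Variable R : realFieldType.

Lemma stored_mem (h : seq (rect R)) x : (x \in stored h) = odd (count_mem x h).
Proof.
elim/last_ind: h => [|h u IH]; first by rewrite /stored /= inE.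
rewrite /stored foldl_rcons -/(stored h) /fsymdiff !inE IH -cats1 count_cat /= addn0 oddD.
by rewrite (eq_sym u x); case: (odd _); case: (x == u).
Qed.

Lemma crossing (P : pred nat) lo hi : (lo <= hi)%N -> P lo -> ~~ P hi ->
  exists2 k, (lo <= k < hi)%N & P k && ~~ P k.+1.
Proof.
elim: hi => [|hi IH]; first by rewrite leqn0 => /eqP-> ->.
rewrite leq_eqVlt => /orP[/eqP-> -> //|]; rewrite ltnS => lohi Plo nPh.
case Ph: (P hi).
  by exists hi; [rewrite lohi ltnSn | rewrite Ph].
by have [k /andP[k1 k2] Pk] := IH lohi Plo (negbT Ph); exists k => //; rewrite k1 ltnS ltnW.
Qed.

Lemma card_symdiff_disj (U V : {fset rect R}) :
  (forall x, x \in U -> x \notin V) -> #|` fsymdiff U V| = (#|` U| + #|` V|)%N.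
Proof.
move=> dUV.
have -> : fsymdiff U V = U `|` V.
  apply/fsetP => x; rewrite /fsymdiff !inE.
  case xU: (x \in U); case xV: (x \in V) => //.
  by move: (dUV x xU); rewrite xV.
rewrite -cardfsUI.
have -> : U `&` V = fset0.
  apply/fsetP => x; rewrite !inE; case xU: (x \in U) => //=.
  by apply/negbTE/dUV.
by rewrite cardfs0 addn0.
Qed.

Lemma OPT_ge (S X : {fset rect R}) : X `<=` S -> independent X -> (#|` X| <= OPT S)%N.
Proof.
move=> XS iX; rewrite /OPT.
apply: (@leq_bigmax_seq _ (enum_fset (fpowerset S)) (fun X : {fset rect R} => `[< independent X >]) (fun X => #|` X|) X).
  by rewrite fpowersetE.
by apply/asboolP.
Qed.

Variable n : nat.
Definition M : R := (2 * n)%:R.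
Definition ar (i : nat) : rect R := ((-1, M), ((2 * i)%:R, (2 * i + 1)%:R)).
Definition br (j : nat) : rect R := (((2 * j)%:R, (2 * j + 1)%:R), (-1, M)).
Definition aseq := map ar (iota 0 n).
Definition bseq := map br (iota 0 n).
Definition Aset := seq_fset tt aseq.
Definition Bset := seq_fset tt bseq.

Lemma ar_inj : injective ar.
Proof.
move=> i j [_ /eqP]; rewrite eqr_nat => /eqP; lia.
Qed.
Lemma br_inj : injective br.
Proof.
move=> i j [/eqP]; rewrite eqr_nat => /eqP; lia.
Qed.
Lemma uniq_aseq : uniq aseq.
Proof. by rewrite map_inj_uniq ?iota_uniq //; apply: ar_inj. Qed.
Lemma uniq_bseq : uniq bseq.
Proof. by rewrite map_inj_uniq ?iota_uniq //; apply: br_inj. Qed.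
Lemma size_aseq : size aseq = n. Proof. by rewrite size_map size_iota. Qed.
Lemma size_bseq : size bseq = n. Proof. by rewrite size_map size_iota. Qed.
Lemma card_A : #|` Aset| = n.
Proof. by rewrite size_seq_fset undup_id ?uniq_aseq // size_aseq. Qed.
Lemma card_B : #|` Bset| = n.
Proof. by rewrite size_seq_fset undup_id ?uniq_bseq // size_bseq. Qed.
Lemma memA x : x \in Aset = (x \in aseq). Proof. by rewrite seq_fsetE. Qed.
Lemma memB x : x \in Bset = (x \in bseq). Proof. by rewrite seq_fsetE. Qed.

Lemma aseqP x : x \in aseq -> exists2 i, (i < n)%N & x = ar i.
Proof. by case/mapP => i; rewrite mem_iota add0n => /andP[_ ?] ->; exists i. Qed.
Lemma bseqP x : x \in bseq -> exists2 i, (i < n)%N & x = br i.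
Proof. by case/mapP => i; rewrite mem_iota add0n => /andP[_ ?] ->; exists i. Qed.

Lemma ar_neq_br i j : ar i <> br j.
Proof.
case=> e _ _ _; have : (-1:R) < (2*j)%:R.
  by apply: (lt_le_trans (ltrN10 _)); rewrite ler0n.
by rewrite e ltxx.
Qed.

Lemma disj_ab x : x \in aseq -> x \notin bseq.
Proof.
case/aseqP => i _ ->; apply/negP => /bseqP [j _ /ar_neq_br]; done.
Qed.

Lemma valid_a i : valid_rect (ar i).
Proof.
by rewrite /valid_rect /= ltr_nat addn1 ltnSn andbT; apply: (lt_le_trans (ltrN10 _)); rewrite ler0n.
Qed.
Lemma valid_b i : valid_rect (br i).
Proof.
by rewrite /valid_rect /= ltr_nat addn1 ltnSn /=; apply: (lt_le_trans (ltrN10 _)); rewrite ler0n.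
Qed.

Lemma cross i j : (i < n)%N -> (j < n)%N -> ~ rect_disjoint (ar i) (br j).
Proof.
move=> hi hj H; apply: (H ((2 * j)%:R, (2 * i)%:R)).
have m1 k : (-1 : R) <= k%:R by apply: (le_trans (lerN10 _)); rewrite ler0n.
rewrite /in_rect /= !ler_nat !m1 /=.
split; repeat (apply/andP; split); lia.
Qed.

Lemma indep_a : independent Aset.
Proof.
move=> r s; rewrite !memA => /aseqP[i _ ->] /aseqP[k _ ->] neq p [].
rewrite /in_rect /= => /andP[_ /andP[h1 h2]] /andP[_ /andP[h3 h4]].
have := le_trans h1 h4; have := le_trans h3 h2; rewrite !ler_nat => e1 e2.
by apply: neq; congr ar; lia.
Qed.
Lemma indep_b : independent Bset.
Proof.
move=> r s; rewrite !memB => /bseqP[i _ ->] /bseqP[k _ ->] neq p [].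
rewrite /in_rect /= => /andP[/andP[h1 h2] _] /andP[/andP[h3 h4] _].
have := le_trans h1 h4; have := le_trans h3 h2; rewrite !ler_nat => e1 e2.
by apply: neq; congr br; lia.
Qed.

Lemma dichotomy (X : {fset rect R}) : X `<=` Aset `|` Bset -> independent X ->
  X `<=` Aset \/ X `<=` Bset.
Proof.
move=> XAB iX; case: (boolP (X `<=` Aset)) => hA; [by left | right].
case/fsubsetPn: hA => y yX yA.
have yB : y \in bseq by move: (fsubsetP XAB y yX); rewrite inE -memB (negbTE yA).
apply/fsubsetP => x xX; rewrite memB.
have := fsubsetP XAB x xX; rewrite inE memA; case/orP => [xa|]; last by rewrite memB.
case/aseqP: (xa) => i hi ex; case/bseqP: (yB) => j hj ey.
exfalso; apply: (cross hi hj); rewrite -ex -ey; apply: iX => //.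
by move=> exy; move: (disj_ab xa); rewrite exy yB.
Qed.


Lemma AB_empty (X : {fset rect R}) : X `<=` Aset -> X `<=` Bset -> X = fset0.
Proof.
move=> XA XB; apply/fsetP => x; rewrite inE; apply/negbTE/negP => xX.
have := fsubsetP XA x xX; have := fsubsetP XB x xX; rewrite memA memB => xb xa.
by move: (disj_ab xa); rewrite xb.
Qed.

Lemma disjXY (X Y : {fset rect R}) : X `<=` Aset -> Y `<=` Bset ->
  forall x, x \in X -> x \notin Y.
Proof.
move=> XA YB x xX; apply/negP => xY.
have := fsubsetP XA x xX; have := fsubsetP YB x xY; rewrite memA memB => xb xa.
by move: (disj_ab xa); rewrite xb.
Qed.

Lemma B_not_sub_A : (0 < n)%N -> ~~ (Bset `<=` Aset).
Proof.
move=> n0; apply/negP => BA.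
have b0 : br 0 \in Bset by rewrite memB; apply: map_f; rewrite mem_iota.
by have := AB_empty BA (fsubset_refl Bset); move/fsetP/(_ (br 0)); rewrite b0 inE.
Qed.

Lemma path_empty m (X : nat -> {fset rect R}) :
  X 0%N = Aset -> X m = Bset ->
  (forall j, (j <= m)%N -> X j `<=` (Aset `|` Bset) /\ independent (X j)) ->
  (forall j, (j < m)%N -> #|` fsymdiff (X j) (X j.+1)| = 1%N) ->
  exists2 j, (j <= m)%N & X j = fset0.
Proof.
move=> X0 Xm hX hS.
case: (posnP n) => [n0|npos].
  by exists 0%N => //; rewrite X0; apply: cardfs0_eq; rewrite card_A.
have h0 : X 0%N `<=` Aset by rewrite X0 fsubset_refl.
have hm : ~~ (X m `<=` Aset) by rewrite Xm B_not_sub_A.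
have [k /andP[_ km] /andP[Pk nPk]] := crossing (P := fun j => X j `<=` Aset) (leq0n m) h0 hm.
have [XAB iX] := hX k.+1 km.
have XB : X k.+1 `<=` Bset by case: (dichotomy XAB iX) => //; rewrite (negbTE nPk).
have := hS k km; rewrite card_symdiff_disj; last exact: disjXY.
case e: #|` X k| => [|[|//]] /=.
  by exists k; [exact: ltnW | exact: cardfs0_eq].
by case=> /cardfs0_eq e2; exists k.+1.
Qed.

Definition H := aseq ++ bseq ++ aseq.

Lemma stored1 j x : x \in stored (aseq ++ take j bseq) = (x \in aseq) || (x \in take j bseq).
Proof.
rewrite stored_mem count_cat !count_uniq_mem ?uniq_aseq ?take_uniq ?uniq_bseq //.
case xa: (x \in aseq); case xb: (x \in take j bseq) => //.
by move: (disj_ab xa); rewrite (mem_take xb).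
Qed.

Lemma stored2 j x : x \in stored (aseq ++ bseq ++ take j aseq) =
  (x \in bseq) || ((x \in aseq) && (x \notin take j aseq)).
Proof.
rewrite stored_mem !count_cat !count_uniq_mem ?uniq_aseq ?take_uniq ?uniq_bseq //.
case xa: (x \in aseq); case xb: (x \in bseq); case xc: (x \in take j aseq) => //.
all: try exact: uniq_aseq.
all: first [by move: (disj_ab xa); rewrite xb | by move: (mem_take xc); rewrite xa].
Qed.

Lemma takeH k : (n <= k)%N -> take k H =
  if (k - n < n)%N then aseq ++ take (k - n) bseq else aseq ++ bseq ++ take (k - n - n) aseq.
Proof.
move=> kn; rewrite /H take_cat size_aseq ltnNge kn /= take_cat size_bseq.
by case: ifP.
Qed.

Lemma factsH k : (n <= k)%N ->
  stored (take k H) `<=` Aset `|` Bset /\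
  (Aset `<=` stored (take k H) \/ Bset `<=` stored (take k H)).
Proof.
move=> kn; rewrite takeH //; case: ifP => _.
  split; last by left; apply/fsubsetP => x; rewrite memA stored1 => ->.
  apply/fsubsetP => x; rewrite stored1 inE memA memB; case/orP => [->//|/mem_take ->].
  by rewrite orbT.
split; last by right; apply/fsubsetP => x; rewrite memB stored2 => ->.
apply/fsubsetP => x; rewrite stored2 inE memA memB; case/orP => [->|/andP[->//]].
by rewrite orbT.
Qed.

Lemma startH : (0 < n)%N -> stored (take n H) `<=` Aset.
Proof.
move=> n0; rewrite takeH // subnn n0.
by apply/fsubsetP => x; rewrite stored1 memA take0 in_nil orbF.
Qed.

Lemma endH : (0 < n)%N -> stored (take (n * 3) H) `<=` Bset.
Proof.
move=> n0; rewrite takeH; last by lia.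
have -> : (n * 3 - n < n)%N = false by apply/negbTE; rewrite -leqNgt; lia.
have -> : (n * 3 - n - n)%N = n by lia.
apply/fsubsetP => x; rewrite stored2 memB -[X in take X aseq]size_aseq take_size.
by case/orP => // /andP[->].
Qed.

Lemma size_H : size H = (n * 3)%N.
Proof. rewrite /H !size_cat size_aseq size_bseq; lia. Qed.

Lemma valid_H : all (@valid_rect R) H.
Proof.
rewrite /H !all_cat /aseq /bseq !all_map.
have ha : all (preim ar (@valid_rect R)) (iota 0 n) by apply/allP => i _; exact: valid_a.
have hb : all (preim br (@valid_rect R)) (iota 0 n) by apply/allP => i _; exact: valid_b.
by rewrite ha hb.
Qed.

Lemma valid_take k : all (@valid_rect R) (take k H).
Proof. by apply/allP => x /mem_take; apply/allP: x; exact: valid_H. Qed.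

End Main.
Lemma part3 (R : realFieldType) (beta : R) : 0 < beta ->
  ~ exists (D : seq (rect R) -> {fset rect R}) (f : nat -> R),
         [/\ dyn_beta_approx beta D, dyn_recourse_bound D f & little_o_n f].
Proof.
move=> hb [D [f [hD hrec hf]]].
have he : 0 < beta / 2%:R by rewrite divr_gt0 // ltr0n.
have [N hN] := hf _ he.
pose n := N.+1.
have n0 : (0 < n)%N by [].
have hbn : 0 < beta * n%:R by rewrite mulr_gt0 // ltr0n.
pose S k := stored (take k (H R n)).
have facts k : (n <= k)%N -> [/\ D (take k (H R n)) `<=` Aset R n `|` Bset R n,
   independent (D (take k (H R n))),
   (n <= #|` S k|)%N, (#|` S k| <= n + n)%N & beta * n%:R <= (#|` D (take k (H R n))|)%:R].
  move=> kn; have [DS iD hopt] := hD _ (valid_take R n k).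
  have [SAB SAorB] := factsH R kn.
  have hO : (n <= OPT (S k))%N.
    case: SAorB => h.
      by have := OPT_ge h (@indep_a R n); rewrite card_A.
    by have := OPT_ge h (@indep_b R n); rewrite card_B.
  split => //.
  - exact: fsubset_trans DS SAB.
  - by case: SAorB => h; [have := fsubset_leq_card h; rewrite card_A
                          | have := fsubset_leq_card h; rewrite card_B].
  - apply: leq_trans (fsubset_leq_card SAB) _.
    by have := cardfsUI (Aset R n) (Bset R n); rewrite card_A card_B => <-; exact: leq_addr.
  - by apply: le_trans hopt; apply: ler_wpM2l; [exact: ltW | rewrite ler_nat].
have h0 : D (take n (H R n)) `<=` Aset R n.
  by have [DS _ _] := hD _ (valid_take R n n); apply: fsubset_trans DS (startH R n0).
have hm : ~~ (D (take (n * 3) (H R n)) `<=` Aset R n).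
  apply/negP => DA.
  have [DS _ _] := hD _ (valid_take R n (n * 3)).
  have DB := fsubset_trans DS (endH R n0).
  have hn3 : (n <= n * 3)%N by lia.
  have [_ _ _ _ hc] := facts (n * 3)%N hn3.
  by move: hc; rewrite (AB_empty DA DB) cardfs0 => /(lt_le_trans hbn); rewrite ltxx.
have hn3 : (n <= n * 3)%N by lia.
have [k /andP[k1 k2] /andP[Pk nPk]] :=
  crossing (P := fun k => D (take k (H R n)) `<=` Aset R n) hn3 h0 hm.
have [_ _ _ _ hck] := facts k k1.
have k1' : (n <= k.+1)%N by lia.
have [DAB iD s1 s2 hck1] := facts k.+1 k1'.
have DB : D (take k.+1 (H R n)) `<=` Bset R n.
  by case: (dichotomy DAB iD) => //; rewrite (negbTE nPk).
have kH : (k < size (H R n))%N by rewrite size_H.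
have := hrec (take k (H R n)) (nth (ar R n 0) (H R n) k).
rewrite -take_nth // => /(_ (valid_take R n k.+1)).
rewrite (card_symdiff_disj (disjXY Pk DB)).
rewrite natrD => hr.
have Ns : (N <= #|` S k.+1|)%N by lia.
have hnorm := hN _ Ns.
have hs : beta / 2%:R * (#|` S k.+1|)%:R <= beta * n%:R.
  apply: le_trans (_ : beta / 2%:R * (n + n)%N%:R <= _).
    by apply: ler_wpM2l; [exact: ltW | rewrite ler_nat].
  by rewrite natrD le_eqVlt; apply/orP; left; apply/eqP; field.
have := ler_norm (f #|` S k.+1|).
rewrite -/(S k.+1) in hr.
lra.
Qed.

Theorem lemma1 (R : realType) :
  (* (1) the lower-bound construction *)
  (forall n : nat, exists A B : {fset rect R},
     [/\ #|` A| = n, #|` B| = n,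
         (forall r, r \in (A `|` B) -> valid_rect r),
         independent A /\ independent B &
         forall (m : nat) (X : nat -> {fset rect R}),
           X 0%N = A -> X m = B ->
           (forall j, (j <= m)%N -> X j `<=` (A `|` B) /\ independent (X j)) ->
           (forall j, (j < m)%N -> #|` fsymdiff (X j) (X j.+1)| = 1%N) ->
           exists2 j, (j <= m)%N & X j = fset0])
  /\
  (* (2) in particular, every MIX function for rectangles has Gamma(2n) >= n *)
  (forall (MIX : {fset rect R} -> {fset rect R} -> nat -> {fset rect R})
          (Gamma : nat -> R),
     is_MIX MIX Gamma -> forall n : nat, n%:R <= Gamma (n + n)%N)
  /\
  (* (3) no beta-approximate fully dynamic structure with o(n) changes per update *)
  (forall beta : R, 0 < beta ->
     ~ exists (D : seq (rect R) -> {fset rect R}) (f : nat -> R),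
         [/\ dyn_beta_approx beta D, dyn_recourse_bound D f & little_o_n f]).
Proof.
split; [|split].
- move=> n; exists (Aset R n), (Bset R n); split.
  + exact: card_A.
  + exact: card_B.
  + move=> r; rewrite inE memA memB => /orP[/aseqP[i _ ->]|/bseqP[i _ ->]];
      [exact: valid_a | exact: valid_b].
  + by split; [exact: indep_a | exact: indep_b].
  + by move=> m X X0 Xm hX hS; exact: path_empty X0 Xm hX hS.
- move=> MIX Gamma hMIX n.
  have := hMIX (Aset R n) (Bset R n) (@indep_a R n) (@indep_b R n).
  rewrite /= card_A card_B => -[h0 hN hI hS hG].
  have hX j : (j <= n + n)%N -> MIX (Aset R n) (Bset R n) j `<=` Aset R n `|` Bset R n
      /\ independent (MIX (Aset R n) (Bset R n) j).
    by move=> /hI [].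
  have [j hj e] := path_empty h0 hN hX hS.
  by have := hG j hj; rewrite e cardfs0 minnn subr_le0.
- exact: part3.
Qed.
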